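(* Let $k>0$ and $\ell\ge 0$ be integers, let $S_1,\dots,S_k$ be discrete segments of length at least $2$, and let $T_1,\dots,T_\ell$ be discrete segments of length $1$. Let $X = S_1\times\dots\times S_k\times T_1\times\dots\times T_\ell \subseteq \mathbb{Z}^{k+\ell}$. Then $\mathrm{rc}(X) = 2k+\ell$.
   Context: A discrete segment of length $b-a$ is a set $\{a,a+1,\dots,b\}$ with $a,b\in\mathbb{Z}$, $a\le b$. $\mathrm{rc}(X)$ is the smallest number of facets of a polyhedron $P\subseteq\mathbb{R}^n$ with $P\cap\mathbb{Z}^n = X$. *)

(* Defs.v *)
From HB Require Import structures.
From mathcomp Require Import all_boot all_order all_algebra.
From mathcomp Require Import reals.
Set Implicit Arguments. Unset Strict Implicit. Unset Printing Implicit Defensive.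
Import Order.TTheory GRing.Theory Num.Theory.
Local Open Scope ring_scope.

Section Polyhedra.
Variable R : realFieldType.

Definition dotp n (a x : 'I_n -> R) : R := \sum_(i < n) a i * x i.

Definition polyhedron_of n m (A : 'I_m -> 'I_n -> R) (b : 'I_m -> R)
  (x : 'I_n -> R) : Prop := forall j, dotp (A j) x <= b j.

Definition is_polyhedron n (P : ('I_n -> R) -> Prop) : Prop :=
  exists m (A : 'I_m -> 'I_n -> R) (b : 'I_m -> R),
    forall x, P x <-> polyhedron_of A b x.

(* F is a face of P: the intersection of P with the boundary hyperplane of a
   valid inequality (a = 0 allowed, giving P itself or the empty face). *)
Definition is_face n (P F : ('I_n -> R) -> Prop) : Prop :=
  exists (a : 'I_n -> R) (b : R),
    (forall x, P x -> dotp a x <= b) /\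
    (forall x, F x <-> (P x /\ dotp a x = b)).

Definition is_facet n (P F : ('I_n -> R) -> Prop) : Prop :=
  [/\ is_face P F, (exists x, F x), (exists x, P x /\ ~ F x) &
      forall G, is_face P G -> (exists x, P x /\ ~ G x) ->
        (forall x, F x -> G x) -> forall x, G x -> F x].

Definition num_facets n (P : ('I_n -> R) -> Prop) (m : nat) : Prop :=
  exists f : 'I_m -> (('I_n -> R) -> Prop),
    (forall i j, (forall x, f i x <-> f j x) -> i = j) /\
    (forall F, is_facet P F <-> exists i, forall x, F x <-> f i x).

Definition int_points_are n (P : ('I_n -> R) -> Prop)
  (X : ('I_n -> int) -> Prop) : Prop :=
  forall z : 'I_n -> int, P (fun i => (z i)%:~R) <-> X z.

Definition rc_is n (X : ('I_n -> int) -> Prop) (r : nat) : Prop :=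
  (exists P, [/\ is_polyhedron P, int_points_are P X & num_facets P r]) /\
  (forall P m, is_polyhedron P -> int_points_are P X -> num_facets P m ->
     (r <= m)%N).

End Polyhedra.

Definition box_X k l (a b : 'I_k -> int) (c : 'I_l -> int)
  (z : 'I_(k + l) -> int) : Prop :=
  (forall i : 'I_k, a i <= z (lshift l i) <= b i) /\
  (forall j : 'I_l, c j <= z (rshift k j) <= c j + 1).

(* Main.v *)
Require Import Defs.
From HB Require Import structures.
From mathcomp Require Import all_boot all_order all_algebra.
From mathcomp Require Import reals ring lra zify.
From Stdlib Require Import Classical ClassicalEpsilon.
Set Implicit Arguments. Unset Strict Implicit. Unset Printing Implicit Defensive.
Import Order.TTheory GRing.Theory Num.Theory.
Local Open Scope ring_scope.

Section Gen.
Variable R : realFieldType.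
Variables (n : nat).
Implicit Types (a g x y d : 'I_n -> R).

Lemma dotp_lin a x y (s t : R) :
  dotp a (fun i => s * x i + t * y i) = s * dotp a x + t * dotp a y.
Proof.
rewrite /dotp !mulr_sumr -big_split /=; apply: eq_bigr => i _; ring.
Qed.

Lemma dotp_lin2 a g x (s t : R) :
  dotp (fun i => s * a i + t * g i) x = s * dotp a x + t * dotp g x.
Proof.
rewrite /dotp !mulr_sumr -big_split /=; apply: eq_bigr => i _; ring.
Qed.

Lemma dotpC a x : dotp a x = dotp x a.
Proof. by rewrite /dotp; apply: eq_bigr => i _; rewrite mulrC. Qed.

Lemma dotp0 x : dotp (fun _ => 0) x = 0.
Proof. by rewrite /dotp big1 // => i _; rewrite mul0r. Qed.

Lemma dotp_ge0 a : 0 <= dotp a a.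
Proof. by rewrite /dotp; apply: sumr_ge0 => i _; rewrite -expr2 sqr_ge0. Qed.

Lemma dotp_eq0 a : dotp a a = 0 -> forall i, a i = 0.
Proof.
move=> h i; have := @psumr_eq0P _ _ predT (fun i => a i * a i).
move=> /(_ (fun i _ => ltac:(rewrite -expr2 sqr_ge0 //)) h i isT).
by move/eqP; rewrite mulf_eq0 orbb => /eqP.
Qed.

Lemma dotp_gt0 a : (exists i, a i != 0) -> 0 < dotp a a.
Proof.
case=> i hi; rewrite lt_def dotp_ge0 andbT; apply/eqP => /dotp_eq0 h.
by move: hi; rewrite h eqxx.
Qed.

Lemma le_sum_one (I : finType) (P : pred I) (F : I -> R) i0 :
  (forall i, P i -> 0 <= F i) -> P i0 -> F i0 <= \sum_(i | P i) F i.
Proof.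
move=> h p0; rewrite (bigD1 i0) //= lerDl; apply: sumr_ge0 => i /andP[pi _].
exact: h.
Qed.

End Gen.

Section Sys.
Variable R : realFieldType.
Variables (n m : nat) (A : 'I_m -> 'I_n -> R) (b : 'I_m -> R).
Implicit Types (a g x y d : 'I_n -> R) (S : {set 'I_m}).

Definition PS S x := forall j, j \in S -> dotp (A j) x <= b j.

Lemma PS_conv S x y (t : R) : 0 <= t <= 1 -> PS S x -> PS S y ->
  PS S (fun i => (1 - t) * x i + t * y i).
Proof.
move=> /andP[t0 t1] hx hy j hj; rewrite dotp_lin.
have := hx j hj; have := hy j hj; nra.
Qed.

Lemma pert S y d : PS S y ->
  (forall k, k \in S -> dotp (A k) y < b k \/ dotp (A k) d <= 0) ->
  exists e : R, 0 < e /\ PS S (fun i => 1 * y i + e * d i).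
Proof.
move=> hy hk.
pose M := \sum_(k | (k \in S) && (dotp (A k) y < b k))
            `|dotp (A k) d| / (b k - dotp (A k) y).
have M0 : 0 <= M.
  apply: sumr_ge0 => k /andP[_ h]; apply: divr_ge0 => //; lra.
exists (1 + M)^-1; split; first by rewrite invr_gt0; lra.
move=> k kS; rewrite dotp_lin mul1r.
have hyk := hy k kS.
case: (hk k kS) => [lt|le].
- set s := b k - dotp (A k) y.
  have s0 : 0 < s by rewrite /s; lra.
  have hM : `|dotp (A k) d| / s <= M.
    apply: (le_sum_one (P := fun k => (k \in S) && (dotp (A k) y < b k))
      (F := fun k => `|dotp (A k) d| / (b k - dotp (A k) y))).
      by move=> i /andP[_ h]; apply: divr_ge0 => //; lra.
    by rewrite kS lt.
  have h1 : dotp (A k) d <= s * M.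
    apply: (le_trans (ler_norm _)).
    have -> : `|dotp (A k) d| = s * (`|dotp (A k) d| / s).
      by field; rewrite lt0r_neq0.
    by rewrite ler_pM2l.
  have h2 : (1 + M)^-1 * dotp (A k) d <= (1 + M)^-1 * (s * M).
    by rewrite ler_pM2l // invr_gt0; lra.
  have h3 : (1 + M)^-1 * (s * M) <= s.
    rewrite mulrC -ler_pdivlMr ?invr_gt0; last lra.
    rewrite invrK; nra.
  rewrite /s in h2 h3; lra.
- have : (1 + M)^-1 * dotp (A k) d <= 0.
    by rewrite pmulr_rle0 // invr_gt0; lra.
  lra.
Qed.

Lemma local_lemma S j y g (gam : R) :
  j \in S -> PS S y -> dotp (A j) y = b j ->
  (forall k, k \in S -> k != j -> dotp (A k) y < b k) ->
  (exists i, A j i != 0) ->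
  (forall x, PS S x -> dotp g x <= gam) -> dotp g y = gam ->
  exists lam : R, (forall i, g i = lam * A j i) /\ gam = lam * b j.
Proof.
move=> jS hy hyj hk hA hg hgy.
have aa0 := dotp_gt0 hA.
pose lam := dotp g (A j) / dotp (A j) (A j).
pose r := fun i => 1 * g i + (- lam) * A j i.
have Ar : dotp (A j) r = 0.
  rewrite dotpC dotp_lin2 mul1r /lam; field.
  by rewrite lt0r_neq0.
have [e [e0 he]] : exists e : R, 0 < e /\ PS S (fun i => 1 * y i + e * r i).
  apply: pert => // k kS; case: (eqVneq k j) => [->|kj].
    by right; rewrite Ar.
  by left; apply: hk.
have h := hg _ he; rewrite dotp_lin mul1r -hgy in h.
have gr : dotp g r <= 0.
  by rewrite -(pmulr_rle0 _ e0); lra.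
have rr : dotp r r = dotp g r.
  by rewrite {1}/r dotp_lin2 mul1r Ar mulr0 addr0.
have r0 : forall i, r i = 0.
  apply: dotp_eq0; apply/eqP; rewrite eq_le dotp_ge0 andbT; lra.
exists lam; split.
  by move=> i; have := r0 i; rewrite /r; lra.
rewrite -hgy -hyj.
have -> : dotp g y = dotp (fun i => lam * A j i + 0 * A j i) y.
  by rewrite /dotp; apply: eq_bigr => i _; have := r0 i; rewrite /r => ?; congr (_ * _); lra.
by rewrite dotp_lin2 mul0r addr0.
Qed.

End Sys.

Section Facets.
Variable R : realFieldType.
Variables (n m : nat) (A : 'I_m -> 'I_n -> R) (b : 'I_m -> R).
Variable S : {set 'I_m}.
Variable P : ('I_n -> R) -> Prop.
Hypothesis hP : forall x, P x <-> PS A b S x.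

Definition irred := forall j, j \in S -> exists x,
  (forall k, k \in S -> k != j -> dotp (A k) x <= b k) /\ b j < dotp (A j) x.

Definition Fj j := fun x => P x /\ dotp (A j) x = b j.

Lemma tight x0 j : j \in S -> (forall k, k \in S -> dotp (A k) x0 < b k) ->
  irred ->
  (exists i, A j i != 0) /\
  exists y, PS A b S y /\ dotp (A j) y = b j /\
    (forall k, k \in S -> k != j -> dotp (A k) y < b k).
Proof.
move=> jS h0 hirr; have [xj [hxj1 hxj2]] := hirr j jS.
have hx0 := h0 j jS.
split.
  apply: NNPP => hn.
  have z : forall i, A j i = 0.
    by move=> i; apply: NNPP => hi; apply: hn; exists i; apply/eqP.
  have e : forall x, dotp (A j) x = 0.
    move=> x; rewrite /dotp big1 // => i _; by rewrite z mul0r.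
  by move: hx0 hxj2; rewrite !e; lra.
pose t := (b j - dotp (A j) x0) / (dotp (A j) xj - dotp (A j) x0).
have t0 : 0 < t by apply: divr_gt0; lra.
have t1 : t < 1 by rewrite ltr_pdivrMr; lra.
have ej : (1 - t) * dotp (A j) x0 + t * dotp (A j) xj = b j.
  rewrite /t; field; lra.
exists (fun i => (1 - t) * x0 i + t * xj i); split; [|split].
- move=> k kS; rewrite dotp_lin; have := h0 k kS.
  case: (eqVneq k j) => [->|kj]; first by rewrite ej.
  have := hxj1 k kS kj; nra.
- by rewrite dotp_lin.
- move=> k kS kj; rewrite dotp_lin; have := h0 k kS; have := hxj1 k kS kj; nra.
Qed.

Lemma PS_P x : PS A b S x -> P x. Proof. by move/hP. Qed.

Lemma R1 x0 j : j \in S -> (forall k, k \in S -> dotp (A k) x0 < b k) ->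
  irred -> is_facet P (Fj j).
Proof.
move=> jS h0 hirr; have [hA [y [hy [hyj hyk]]]] := tight jS h0 hirr.
split.
- exists (A j), (b j); split; last by [].
  by move=> x /hP /(_ j jS).
- by exists y; split => //; apply: PS_P.
- exists x0; split; first by apply: PS_P => k kS; apply/ltW/h0.
  by case=> _ e; have := h0 j jS; rewrite e ltxx.
- move=> G [g [gam [hg hG]]] [p [Pp nGp]] sub x Gx.
  have Gy : G y by apply: sub; split => //; exact: PS_P.
  have [Py gy] := (hG y).1 Gy.
  have [lam [hl hgam]] := local_lemma jS hy hyj hyk hA
     (fun x hx => hg x (PS_P hx)) gy.
  have [Px gx] := (hG x).1 Gx.
  case: (eqVneq lam 0) => [l0|l0].
    exfalso; apply: nGp; apply/hG; split => //.
    rewrite hgam l0 mul0r.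
    have -> : g = fun _ => 0 by apply: boolp.funext => i; rewrite hl l0 mul0r.
    by rewrite dotp0.
  split => //.
  have : dotp g x = lam * dotp (A j) x.
    have -> : dotp g x = dotp (fun i => lam * A j i + 0 * A j i) x.
      by rewrite /dotp; apply: eq_bigr => i _; rewrite hl mul0r addr0.
    by rewrite dotp_lin2 mul0r addr0.
  rewrite gx hgam => /eqP; rewrite eq_sym (can2_eq (mulKf l0) (mulVKf l0)).
  by rewrite mulKf // => /eqP.
Qed.


Lemma R2 x0 j j' : j \in S -> j' \in S ->
  (forall k, k \in S -> dotp (A k) x0 < b k) -> irred ->
  (forall x, Fj j x <-> Fj j' x) -> j = j'.
Proof.
move=> jS j'S h0 hirr e; apply: NNPP => ne.
have [hA [y [hy [hyj hyk]]]] := tight jS h0 hirr.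
have [hA' [y' [hy' [hyj' hyk']]]] := tight j'S h0 hirr.
have gy : dotp (A j') y = b j'.
  by have [] := (e y).1 (conj (PS_P hy) hyj).
have [lam [hl hgam]] := local_lemma jS hy hyj hyk hA
     (g := A j') (gam := b j') (fun x hx => hx j' j'S) gy.
case: (eqVneq lam 0) => [l0|l0].
  case: hA' => i; by rewrite hl l0 mul0r eqxx.
have : dotp (A j') y' = lam * dotp (A j) y'.
  have -> : dotp (A j') y' = dotp (fun i => lam * A j i + 0 * A j i) y'.
    by rewrite /dotp; apply: eq_bigr => i _; rewrite hl mul0r addr0.
  by rewrite dotp_lin2 mul0r addr0.
rewrite hyj' hgam => /eqP; rewrite eq_sym (can2_eq (mulKf l0) (mulVKf l0)).
rewrite mulKf // => /eqP ey.
have := hyk' j jS (ltac:(apply/eqP => h; apply: ne; by rewrite h)).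
by rewrite ey ltxx.
Qed.

Lemma R3 x0 F : (forall k, k \in S -> dotp (A k) x0 < b k) ->
  is_facet P F -> exists2 j, j \in S & forall x, F x <-> Fj j x.
Proof.
move=> h0.
case=> [[a [be [ha hF]]] [z0 Fz0] [p [Pp nFp]] hmax].
suff [j jS hj] : exists2 j, j \in S & forall x, F x -> dotp (A j) x = b j.
  have hfj : forall x, Fj j x -> F x.
    have Fjface : is_face P (Fj j).
      exists (A j), (b j); split; last by [].
      by move=> x /hP /(_ j jS).
    apply: (hmax _ Fjface).
      exists x0; split; first by apply: PS_P => k kS; apply/ltW/h0.
      by case=> _ e; have := h0 j jS; rewrite e ltxx.
    by move=> x Fx; split; [exact: ((hF x).1 Fx).1 | exact: hj].
  exists j => // x; split; last exact: hfj.
  by move=> Fx; split; [exact: ((hF x).1 Fx).1 | exact: hj].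
apply: NNPP => hn.
have hx : forall j, j \in S -> exists x, F x /\ dotp (A j) x < b j.
  move=> j jS; apply: NNPP => hn2; apply: hn; exists j => // x Fx.
  apply: NNPP => ne; apply: hn2; exists x; split => //.
  have [Px _] := (hF x).1 Fx.
  by rewrite lt_neqAle; apply/andP; split; [apply/eqP | exact: (proj1 (hP x) Px j jS)].
have conv : forall x y, F x -> F y -> F (fun i => (1 - 2^-1) * x i + 2^-1 * y i).
  move=> x y /hF [Px ax] /hF [Py ay]; apply/hF; split.
    apply: PS_P; apply: PS_conv; [|exact/hP|exact/hP].
    apply/andP; split; rewrite ?invr_ge0 ?invf_le1 ?ler0n ?ler1n //; lra.
  by rewrite dotp_lin ax ay; field.
have : forall s : seq 'I_m, all (fun j => j \in S) s ->
    exists z, F z /\ forall j, j \in s -> dotp (A j) z < b j.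
  elim=> [|j s IH] /=; first by move=> _; exists z0; split.
  case/andP=> jS hs; have [z [Fz hz]] := IH hs.
  have [x [Fx hxj]] := hx j jS.
  exists (fun i => (1 - 2^-1) * z i + 2^-1 * x i); split; first exact: conv.
  move=> k; rewrite in_cons => /orP [/eqP ->|ks].
    rewrite dotp_lin.
    have [Pz _] := (hF z).1 Fz.
    have := (proj1 (hP z) Pz j jS); lra.
  rewrite dotp_lin.
  have [Px _] := (hF x).1 Fx.
  have := (proj1 (hP x) Px k (allP hs k ks)); have := hz k ks; lra.
move=> /(_ (enum S)) [].
  by apply/allP => j; rewrite mem_enum.
move=> z [Fz hz].
have [Pz az] := (hF z).1 Fz.
have [e [e0 he]] : exists e : R, 0 < e /\ PS A b S (fun i => 1 * z i + e * a i).
  apply: pert; first exact/hP.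
  by move=> k kS; left; apply: hz; rewrite mem_enum.
have := ha _ (PS_P he); rewrite dotp_lin mul1r az => h.
have aa : dotp a a <= 0 by rewrite -(pmulr_rle0 _ e0); lra.
have a0 : forall i, a i = 0.
  apply: dotp_eq0; apply/eqP; rewrite eq_le dotp_ge0 andbT //.
have ea : a = fun _ => 0 by apply: boolp.funext => i; rewrite a0.
apply: nFp; apply/hF; split => //.
by rewrite -az ea !dotp0.
Qed.

End Facets.

Lemma is_facet_ext (R : realFieldType) n (P F F' : ('I_n -> R) -> Prop) :
  is_facet P F -> (forall x, F x <-> F' x) -> is_facet P F'.
Proof.
case=> [[a [be [ha hF]]] [z Fz] [p [Pp nFp]] hmax] e; split.
- exists a, be; split => // x; rewrite -e; exact: hF.
- by exists z; apply/e.
- by exists p; split => // /e.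
- move=> G fG pG sub x Gx; apply/e; apply: (hmax G fG pG) => // y Fy.
  by apply: sub; apply/e.
Qed.

Lemma inj_card (T U : finType) (Rel : T -> U -> Prop) (S : {set U}) :
  (forall t, exists2 u, u \in S & Rel t u) ->
  (forall t t' u, Rel t u -> Rel t' u -> t = t') -> (#|T| <= #|S|)%N.
Proof.
move=> ex inj.
have ex' : forall t, {u | u \in S /\ Rel t u}.
  move=> t; apply: constructive_indefinite_description.
  by have [u ?] := ex t; exists u.
pose f t := proj1_sig (ex' t).
have finj : injective f.
  move=> t t' e; have [_ h1] := proj2_sig (ex' t); have [_ h2] := proj2_sig (ex' t').
  apply: (inj t t' (f t)) => //; rewrite e //.
rewrite -cardsT -(card_imset _ finj); apply: subset_leq_card.
by apply/subsetP => u /imsetP [t _ ->]; have [] := proj2_sig (ex' t).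
Qed.

Lemma num_facets_le (R : realFieldType) n (P : ('I_n -> R) -> Prop) m1 m2 :
  num_facets P m1 -> num_facets P m2 -> (m1 <= m2)%N.
Proof.
move=> [f1 [i1 h1]] [f2 [i2 h2]].
have := @inj_card _ _ (fun i i' => forall x, f1 i x <-> f2 i' x) setT.
rewrite !cardsT !card_ord; apply.
  move=> i; have /h2 [i' hi'] : is_facet P (f1 i) by apply/h1; exists i.
  by exists i'.
move=> i i' u e e'; apply: i1 => x; rewrite e e'; done.
Qed.

Section Count.
Variable R : realFieldType.
Variables (n m : nat) (A : 'I_m -> 'I_n -> R) (b : 'I_m -> R).
Variable P : ('I_n -> R) -> Prop.

Lemma minimal_S : (forall x, P x <-> polyhedron_of A b x) ->
  exists S, (forall x, P x <-> PS A b S x) /\ irred A b S.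
Proof.
move=> hP.
suff : forall N (S : {set 'I_m}), (#|S| <= N)%N -> (forall x, P x <-> PS A b S x) ->
  exists S, (forall x, P x <-> PS A b S x) /\ irred A b S.
  apply; first exact: (leqnn #|[set: 'I_m]|).
  move=> x; rewrite hP; split=> [h j _|h j]; [exact: h|apply: h; rewrite inE //].
elim=> [|N IH] S hS hPS.
  exists S; split => // j jS; exfalso.
  by move: hS; rewrite leqn0 => /eqP /cards0_eq Se; rewrite Se inE in jS.
case: (classic (exists2 j, j \in S & forall x, PS A b S x <-> PS A b (S :\ j) x)).
  case=> j jS e; apply: (IH (S :\ j)).
    by move: hS; rewrite (cardsD1 j S) jS add1n ltnS.
  by move=> x; rewrite hPS e.
move=> hn; exists S; split => // j jS.
apply: NNPP => hn2; apply: hn; exists j => // x; split.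
  by move=> h k /setD1P [_ kS]; apply: h.
move=> h k kS; case: (eqVneq k j) => [->|kj]; last by apply: h; rewrite !inE kj.
apply: NNPP => nle; apply: hn2; exists x; split.
  by move=> k' k'S k'j; apply: h; rewrite !inE k'j.
by rewrite ltNge; apply/negP.
Qed.

Lemma facets_count S x0 : (forall x, P x <-> PS A b S x) -> irred A b S ->
  (forall k, k \in S -> dotp (A k) x0 < b k) -> num_facets P #|S|.
Proof.
move=> hP hirr h0.
have x0S : forall j, j \in S -> j \in S by [].
exists (fun i => Fj A b P (enum_val i)); split.
  move=> i i' e; apply: enum_val_inj.
  by apply: (R2 hP (enum_valP i) (enum_valP i') h0 hirr).
move=> F; split.
  move=> /(R3 hP h0) [j jS hj].
  exists (enum_rank_in jS j); by rewrite enum_rankK_in.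
case=> i hi; apply: (is_facet_ext _ (fun x => iff_sym (hi x))).
exact: (R1 hP (enum_valP i) h0 hirr).
Qed.

End Count.

Section Box.
Variables (k l : nat) (a b : 'I_k -> int) (c : 'I_l -> int).
Hypothesis hab : forall i, a i + 2 <= b i.
Local Notation n := (k + l)%N.

Definition lo (t : 'I_n) : int :=
  match split t with inl i => a i | inr j => c j end.
Definition hi (t : 'I_n) : int :=
  match split t with inl i => b i | inr j => c j + 1 end.

Lemma boxE z : box_X a b c z <-> forall t, lo t <= z t <= hi t.
Proof.
split.
  case=> h1 h2 t; rewrite /lo /hi; case: splitP => [i ei|j ej].
    by have -> : t = lshift l i by apply: val_inj.
  by have -> : t = rshift k j by apply: val_inj.
move=> h; split.
  move=> i; have := h (lshift l i); rewrite /lo /hi.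
  by have -> : split (lshift l i) = inl i by rewrite -[lshift l i]/(unsplit (inl i)) unsplitK.
move=> j; have := h (rshift k j); rewrite /lo /hi.
by have -> : split (rshift k j) = inr j by rewrite -[rshift k j]/(unsplit (inr j)) unsplitK.
Qed.

Variable R : realFieldType.
Variables (m : nat) (A : 'I_m -> 'I_n -> R) (bb : 'I_m -> R) (S : {set 'I_m}).
Variable P : ('I_n -> R) -> Prop.
Hypothesis hP : forall x, P x <-> PS A bb S x.
Hypothesis hX : int_points_are P (box_X a b c).

Lemma MID (s : 'I_n -> int) : (forall t, 2 * lo t <= s t <= 2 * hi t) ->
  P (fun i => (s i)%:~R / 2).
Proof.
move=> hs.
pose u t := ((s t) %/ 2)%Z.
pose v t := s t - u t.
have huv : forall t, lo t <= u t <= hi t /\ lo t <= v t <= hi t.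
  move=> t; have := hs t; have e := divz_eq (s t) 2.
  have r0 : 0 <= ((s t) %% 2)%Z by apply: modz_ge0.
  have r1 : ((s t) %% 2)%Z < 2 by apply: (ltz_mod (s t) (d := 2)).
  rewrite /v /u; move: e r0 r1.
  set q := ((s t) %/ 2)%Z; set r := ((s t) %% 2)%Z.
  move=> e r0 r1 /andP [h1 h2]; split; apply/andP; split; lia.
have Pu : P (fun i => (u i)%:~R) by apply/hX/boxE => t; have [] := huv t.
have Pv : P (fun i => (v i)%:~R) by apply/hX/boxE => t; have [] := huv t.
have ht : 0 <= (2^-1 : R) <= 1.
  apply/andP; split; rewrite ?invr_ge0 ?invf_le1 ?ler0n ?ler1n //; lra.
have := PS_conv ht (proj1 (hP _) Pu) (proj1 (hP _) Pv).
have e : (fun i => (1 - 2^-1) * (u i)%:~R + 2^-1 * (v i)%:~R) =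
         (fun i => (s i)%:~R / 2 : R).
  apply: boolp.funext => i; rewrite /v intrD intrN; by field.
by rewrite e => h; apply/hP.
Qed.


Lemma INT : exists x0, P x0 /\ forall a' : 'I_n -> R, (exists i, a' i != 0) ->
  exists p, P p /\ dotp a' x0 < dotp a' p.
Proof.
pose s0 t := match split t with inl i => 2 * a i + 2 | inr j => 2 * c j + 1 end.
have hs : forall (ds : 'I_n -> int), (forall t, ds t = 1 \/ ds t = -1) ->
    forall t, 2 * lo t <= s0 t + ds t <= 2 * hi t.
  move=> ds hds t; have := hds t; rewrite /lo /hi /s0; case: (split t) => [i|j].
    by move=> hd; have := hab i; case: hd => ->; lia.
  by case=> ->; lia.
exists (fun i => (s0 i + 0)%:~R / 2); split.
  apply: MID => t; have := hs (fun _ => 1) (fun _ => or_introl erefl) t.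
  have := hs (fun _ => -1) (fun _ => or_intror erefl) t; lia.
move=> a' [i0 hi0].
pose ds t : int := if 0 <= a' t then 1 else -1.
have hds : forall t, ds t = 1 \/ ds t = -1 by move=> t; rewrite /ds; case: ifP; auto.
exists (fun i => (s0 i + ds i)%:~R / 2); split; first exact: MID (hs ds hds).
have e : dotp a' (fun i => (s0 i + ds i)%:~R / 2) =
   dotp a' (fun i => (s0 i + 0)%:~R / 2) + \sum_i `|a' i| / 2.
  rewrite /dotp -big_split /=; apply: eq_bigr => i _.
  rewrite !intrD /ds; case: ifP => h.
    by rewrite ger0_norm // rmorph1 rmorph0; field.
  rewrite ltr0_norm ?rmorphN1 ?rmorph0; last by rewrite ltNge h.
  by field.
rewrite e ltrDl.
apply: (lt_le_trans _ (le_sum_one (P := predT) (F := fun i => `|a' i| / 2) _ (i0 := i0) isT)).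
  by apply: divr_gt0; rewrite ?normr_gt0 //; lra.
by move=> i _; apply: divr_ge0.
Qed.


Definition hp (h : ('I_k + 'I_k) + 'I_l) (t : 'I_n) : int :=
  match split t with
  | inl i' => match h with
              | inl (inl i) => if i == i' then a i - 1 else a i' + 1
              | inl (inr i) => if i == i' then b i + 1 else a i' + 1
              | inr _ => a i' + 1 end
  | inr j' => match h with
              | inr j => if j == j' then c j + 2 else c j'
              | _ => c j' end
  end.

Lemma split_l (i : 'I_k) : split (lshift l i) = inl i.
Proof. by rewrite -[lshift l i]/(unsplit (inl i)) unsplitK. Qed.
Lemma split_r (j : 'I_l) : split (rshift k j) = inr j.
Proof. by rewrite -[rshift k j]/(unsplit (inr j)) unsplitK. Qed.

Lemma hp_out h : ~ box_X a b c (hp h).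
Proof.
move/boxE; case: h => [[i|i]|j].
- move/(_ (lshift l i)); rewrite /lo /hp split_l eqxx; lia.
- move/(_ (lshift l i)); rewrite /hi /hp split_l eqxx; lia.
- move/(_ (rshift k j)); rewrite /hi /hp split_r eqxx; lia.
Qed.

Lemma hp_mid h h' : h != h' ->
  forall t, 2 * lo t <= hp h t + hp h' t <= 2 * hi t.
Proof.
move=> hh' t; rewrite /lo /hi /hp; case: (split t) => [i'|j'].
  have := hab i'.
  case: h hh' => [[i|i]|j]; case: h' => [[i2|i2]|j2] => hh';
  repeat (case: eqP => [?|?]; subst); try lia; by rewrite eqxx in hh'.
case: h hh' => [[i|i]|j]; case: h' => [[i2|i2]|j2] => hh';
repeat (case: eqP => [?|?]; subst); try lia; by rewrite eqxx in hh'.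
Qed.

Lemma HBOUND : (2 * k + l <= #|S|)%N.
Proof.
have -> : (2 * k + l = #|{: ('I_k + 'I_k) + 'I_l}|)%N.
  by rewrite !card_sum !card_ord; lia.
apply: (@inj_card _ _ (fun h j => j \in S /\ bb j < dotp (A j) (fun i => (hp h i)%:~R))).
  move=> h; apply: NNPP => hn.
  apply: (hp_out (h := h)); apply/hX/hP => j jS.
  rewrite leNgt; apply/negP => lt; apply: hn; exists j => //.
move=> h h' j [jS l1] [_ l2]; apply/eqP; apply: NNPP => /negP ne.
have := proj1 (hP _) (MID (hp_mid ne)) j jS.
have -> : (fun i => (hp h i + hp h' i)%:~R / 2 : R) =
   (fun i => 2^-1 * (hp h i)%:~R + 2^-1 * (hp h' i)%:~R).
  by apply: boolp.funext => i; rewrite intrD; field.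
rewrite dotp_lin; lra.
Qed.

End Box.

Lemma KEY (k l : nat) (a b : 'I_k -> int) (c : 'I_l -> int)
  (hab : forall i, a i + 2 <= b i) (R : realFieldType) (m : nat)
  (A : 'I_m -> 'I_(k + l) -> R) (bb : 'I_m -> R) (P : ('I_(k + l) -> R) -> Prop) :
  (forall x, P x <-> polyhedron_of A bb x) -> int_points_are P (box_X a b c) ->
  exists S : {set 'I_m}, num_facets P #|S| /\ (2 * k + l <= #|S|)%N.
Proof.
move=> hP0 hX.
have [S [hP hirr]] := minimal_S hP0.
have [x0 [Px0 hint]] := INT hab hP hX.
exists S; split; last exact: (HBOUND hab hP hX).
apply: (facets_count hP hirr (x0 := x0)) => j jS.
have [xj [_ hxj]] := hirr j jS.
have hA : exists i, A j i != 0.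
  apply: NNPP => hn.
  have z : forall i, A j i = 0.
    by move=> i; apply: NNPP => hi; apply: hn; exists i; apply/eqP.
  have e : forall x, dotp (A j) x = 0.
    move=> x; rewrite /dotp big1 // => i _; by rewrite z mul0r.
  have := proj1 (hP x0) Px0 j jS; move: hxj; rewrite !e; lra.
have [p [Pp lt]] := hint _ hA.
exact: (lt_le_trans lt (proj1 (hP p) Pp j jS)).
Qed.

Section Constr.
Variables (k l : nat) (a b : 'I_k -> int) (c : 'I_l -> int).
Hypothesis hab : forall i, a i + 2 <= b i.
Hypothesis hk : (0 < k)%N.
Variable R : realFieldType.
Local Notation n := (k + l)%N.
Implicit Types (x : 'I_n -> R).

Definition i0 : 'I_k := Ordinal hk.
Definition BB : R := (b i0 - a i0 + 1)%:~R.
Definition gam : R := (4 * BB)^-1.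

Definition uval (j : nat) x : R :=
  match (insub j : option 'I_l) with
  | Some t => x (rshift k t) - (c t)%:~R - 2^-1
  | None => 0 end.

Fixpoint pv (j : nat) x : R :=
  match j with
  | 0 => (b i0)%:~R - x (lshift l i0)
  | j'.+1 => 2^-1 + gam * pv j' x - uval j' x
  end.

Definition frow (r : ('I_k + 'I_k) + 'I_l) x : R :=
  match r with
  | inl (inl i) => x (lshift l i) - (a i)%:~R
  | inl (inr i) => if i == i0 then pv l x else (b i)%:~R - x (lshift l i)
  | inr t => 2^-1 + gam * pv t x + uval t x
  end.

Definition Pc x := forall r, 0 <= frow r x.

Lemma BB_ge : 3 <= BB.
Proof.
rewrite /BB; have := hab i0 => h.
have -> : (3 : R) = (3 : int)%:~R by [].
by rewrite ler_int; lia.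
Qed.

Lemma gam_gt0 : 0 < gam.
Proof. have := BB_ge; rewrite /gam => h; rewrite invr_gt0; lra. Qed.

Lemma gamBB : gam * BB = 4^-1.
Proof. have := BB_ge; rewrite /gam => h; field; lra. Qed.

Lemma uvalE (t : 'I_l) x : uval t x = x (rshift k t) - (c t)%:~R - 2^-1.
Proof. by rewrite /uval valK. Qed.


Lemma int_half (m : int) : (1 <= m /\ 2^-1 <= m%:~R - 2^-1 :> R) \/
                           (m <= 0 /\ m%:~R - 2^-1 <= - 2^-1 :> R).
Proof.
case: (lerP 1 m) => h.
  left; split => //; have : (1 : R) <= m%:~R by rewrite -(ler_int R 1) in h.
  lra.
right; have h' : m <= 0 by lia.
split => //; have : m%:~R <= (0 : R) by rewrite -(ler_int R m 0) in h'.
lra.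
Qed.

Lemma constr_int (z : 'I_n -> int) :
  Pc (fun i => (z i)%:~R) <-> box_X a b c z.
Proof.
set x := fun i => (z i)%:~R : R.
have g0 := gam_gt0; have gB := gamBB; have B3 := BB_ge.
split.
- move=> hP.
  have hlo : forall i, a i <= z (lshift l i).
    move=> i; have := hP (inl (inl i)); rewrite /frow /= subr_ge0 ler_int //.
  have hrow : forall t : 'I_l, 0 <= 2^-1 + gam * pv t x + uval t x.
    by move=> t; apply: (hP (inr t)).
  have hrec : forall (t : 'I_l), pv t.+1 x = 2^-1 + gam * pv t x - uval t x by [].
  have D : forall d, (d <= l)%N -> 0 <= pv (l - d) x.
    elim=> [|d IH] hd.
      by rewrite subn0; have := hP (inl (inr i0)); rewrite /frow /=.
    have hj : (l - d.+1 < l)%N by lia.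
    pose t := Ordinal hj.
    have e : (l - d = t.+1)%N by rewrite /=; lia.
    have := IH (ltnW hd); rewrite e hrec => h1.
    have h2 := hrow t.
    rewrite uvalE in h1 h2.
    have : 0 <= gam * pv t x.
      have := int_half (z (rshift k t) - c t). rewrite (intrB R).
      rewrite /x in h1 h2 *; case=> [[_ hh]|[_ hh]]; lra.
    by rewrite pmulr_rge0.
  have pv0 : 0 <= pv 0 x by have := D l (leqnn l); rewrite subnn.
  have U : forall j, (j <= l)%N -> pv j x <= BB.
    elim=> [|j IH] hj.
      rewrite /= /x /BB; have := hlo i0; rewrite -(ler_int R) => h.
      rewrite intrD intrB rmorph1; lra.
    pose t := Ordinal hj.
    have h := hrow t; have h2 := IH (ltnW hj); simpl in h.
    have : gam * pv j x <= gam * BB by rewrite ler_pM2l.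
    rewrite /=; lra.
  have hup : forall i, z (lshift l i) <= b i.
    move=> i; case: (eqVneq i i0) => [->|ne].
      by move: pv0; rewrite /= /x subr_ge0 ler_int.
    by have := hP (inl (inr i)); rewrite /frow /= (negbTE ne) subr_ge0 ler_int.
  split; first by move=> i; rewrite hlo hup.
  move=> t.
  have h1 := hrow t; have h2 := D (l - t.+1)%N (leq_subr _ _).
  have e : (l - (l - t.+1) = t.+1)%N by have := ltn_ord t; lia.
  rewrite e hrec in h2.
  have := U t (ltnW (ltn_ord t)).
  have : gam * pv t x <= gam * BB by rewrite ler_pM2l // U // ltnW.
  rewrite uvalE /x in h1 h2 * => hh1 _.
  have : (z (rshift k t) - c t)%:~R <= (5 / 4 : R) by rewrite intrB; lra.
  have : (- 1 / 4 : R) <= (z (rshift k t) - c t)%:~R by rewrite intrB; lra.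
  move=> q1 q2.
  have r1 : ~ (z (rshift k t) - c t <= -1).
    move=> hh; have : (z (rshift k t) - c t)%:~R <= (-1 : int)%:~R :> R by rewrite ler_int.
    rewrite rmorphN1; lra.
  have r2 : ~ (2 <= z (rshift k t) - c t).
    move=> hh; have : (2 : int)%:~R <= (z (rshift k t) - c t)%:~R :> R by rewrite ler_int.
    have -> : (2 : int)%:~R = 2 :> R by [].
    lra.
  apply/andP; split.
    by apply: NNPP => hn; apply: r1; lia.
  by apply: NNPP => hn; apply: r2; lia.
- case=> hS hT.
  have uT : forall t : 'I_l, - 2^-1 <= uval t x <= 2^-1.
    move=> t; rewrite uvalE /x; have := hT t => /andP [h1 h2].
    have : (0 : R) <= (z (rshift k t) - c t)%:~R by rewrite ler0z; lia.
    have : (z (rshift k t) - c t)%:~R <= 1 :> R.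
      by rewrite -[1 : R]/((1 : int)%:~R) ler_int; lia.
    rewrite intrB => ??; apply/andP; split; lra.
  have uall : forall j, uval j x <= 2^-1.
    move=> j; rewrite /uval; case: insubP => [t _ _|_]; last by rewrite invr_ge0; lra.
    by have := uT t => /andP [_ ?]; rewrite -uvalE.
  have P0 : forall j, 0 <= pv j x.
    elim=> [|j IH] /=.
      by have := hS i0 => /andP [_ h]; rewrite /x subr_ge0 ler_int.
    have := uall j; have : 0 <= gam * pv j x by rewrite mulr_ge0 // ltW.
    lra.
  case=> [[i|i]|t]; rewrite /frow /=.
  + by have := hS i => /andP [h _]; rewrite /x subr_ge0 ler_int.
  + case: ifP => _; first exact: P0.
    by have := hS i => /andP [_ h]; rewrite /x subr_ge0 ler_int.
  + have := uT t => /andP [h _]; have : 0 <= gam * pv t x by rewrite mulr_ge0 // ltW.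
    lra.
Qed.

End Constr.

Section Aff.
Variable R : realFieldType.
Variable n : nat.
Definition aff (f : ('I_n -> R) -> R) :=
  exists (al : 'I_n -> R) (be : R), forall x, f x = dotp al x + be.

Lemma aff_ext f g : aff f -> (forall x, f x = g x) -> aff g.
Proof. by case=> al [be h] e; exists al, be => x; rewrite -e. Qed.

Lemma aff_const v : aff (fun _ => v).
Proof. by exists (fun _ => 0), v => x; rewrite dotp0 add0r. Qed.

Lemma aff_coord t : aff (fun x => x t).
Proof.
exists (fun i => if i == t then 1 else 0), 0 => x.
rewrite addr0 /dotp (bigD1 t) //= eqxx mul1r big1 ?addr0 // => i /negbTE ->.
by rewrite mul0r.
Qed.

Lemma aff_lin f g s u : aff f -> aff g -> aff (fun x => s * f x + u * g x).
Proof.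
case=> al [be hf] [al' [be' hg]].
exists (fun i => s * al i + u * al' i), (s * be + u * be') => x.
rewrite dotp_lin2 hf hg; ring.
Qed.
End Aff.

Section Final.
Variables (k l : nat) (a b : 'I_k -> int) (c : 'I_l -> int).
Hypothesis hab : forall i, a i + 2 <= b i.
Hypothesis hk : (0 < k)%N.
Variable R : realFieldType.

Lemma pv_aff j : aff (fun x => pv a b c hk j x : R).
Proof.
elim: j => [|j IH] /=.
  apply: (aff_ext (aff_lin (b (i0 hk))%:~R (-1) (aff_const _ 1) (aff_coord _ (lshift l (i0 hk))))).
  move=> x; ring.
have hu : aff (fun x : 'I_(k + l) -> R => uval c j x : R).
  rewrite /uval; case: insubP => [t _ _|_].
    apply: (aff_ext (aff_lin 1 (-1) (aff_coord _ (rshift k t)) (aff_const _ ((c t)%:~R + 2^-1)))).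
    move=> x; ring.
  exact: aff_const.
have h1 := aff_lin 1 (gam a b hk R) (aff_const _ 2^-1) IH.
apply: (aff_ext (aff_lin 1 (-1) h1 hu)) => x /=; ring.
Qed.

Lemma frow_aff r : aff (fun x => frow a b c hk r x : R).
Proof.
case: r => [[i|i]|t].
- apply: (aff_ext (aff_lin 1 (-1) (aff_coord _ (lshift l i)) (aff_const _ (a i)%:~R))).
  move=> x; rewrite /frow /=; ring.
- rewrite /frow; case: (i =P i0 hk) => [_|_] /=; first exact: pv_aff.

  apply: (aff_ext (aff_lin (-1) 1 (aff_coord _ (lshift l i)) (aff_const _ (b i)%:~R))).
  move=> x; rewrite /frow /=; ring.
- have h1 := aff_lin 1 (gam a b hk R) (aff_const _ 2^-1) (pv_aff t).
  have hu : aff (fun x : 'I_(k + l) -> R => uval c t x : R).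
    by apply: (aff_ext (aff_lin 1 (-1) (aff_coord _ (rshift k t)) (aff_const _ ((c t)%:~R + 2^-1)))) => x; rewrite uvalE; ring.
  apply: (aff_ext (aff_lin 1 1 h1 hu)) => x /=; ring.
Qed.

Lemma Pc_poly : exists (A : 'I_(2 * k + l) -> 'I_(k + l) -> R) (bb : 'I_(2 * k + l) -> R),
  forall x, Pc a b c hk x <-> polyhedron_of A bb x.
Proof.
have ex' : forall r, {p : ('I_(k + l) -> R) * R |
    forall x, frow a b c hk r x = dotp p.1 x + p.2}.
  move=> r; apply: constructive_indefinite_description.
  by have [al [be h]] := frow_aff r; exists (al, be).
have cardRT : #|{: ('I_k + 'I_k) + 'I_l}| = (2 * k + l)%N.
  by rewrite !card_sum !card_ord; lia.
pose ev (i : 'I_(2 * k + l)) := enum_val (cast_ord (esym cardRT) i).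
pose er r := cast_ord cardRT (enum_rank r).
have evK : forall r, ev (er r) = r.
  by move=> r; rewrite /ev /er cast_ordK enum_rankK.
exists (fun i t => (-1) * (proj1_sig (ex' (ev i))).1 t + 0 * (proj1_sig (ex' (ev i))).1 t).
exists (fun i => (proj1_sig (ex' (ev i))).2).
move=> x; split.
  move=> h i; rewrite dotp_lin2; have := h (ev i); rewrite (proj2_sig (ex' (ev i))).
  lra.
move=> h r; have := h (er r); rewrite dotp_lin2 evK.
rewrite /frow; have := proj2_sig (ex' r) x; rewrite /frow => ->; lra.
Qed.

End Final.

Unset Implicit Arguments.
Set Strict Implicit.
Theorem theorem5p2 (R : realType) (k l : nat) (a b : 'I_k -> int)
  (c : 'I_l -> int) :
  (0 < k)%N ->
  (forall i : 'I_k, a i + 2 <= b i) ->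
  rc_is R (box_X a b c) (2 * k + l)%N.
Proof.
move=> hk hab; split.
  have [A [bb hP]] := @Pc_poly k l a b c hk R.
  exists (fun x : 'I_(k + l) -> R => Pc a b c hk x); split.
  - by exists (2 * k + l)%N, A, bb.
  - by move=> z; apply: constr_int.
  - have hX : int_points_are (fun x : 'I_(k + l) -> R => Pc a b c hk x) (box_X a b c) by move=> z; apply: constr_int.
    have [S [hF hS]] := KEY hab hP hX.
    have : (#|S| <= 2 * k + l)%N by rewrite -[X in (_ <= X)%N]card_ord max_card.
    move=> hS'; have -> : (2 * k + l)%N = #|S| by apply/eqP; rewrite eqn_leq hS hS'.
    exact: hF.
move=> P m [m0 [A [bb hP]]] hX hF.
have [S [hFS hS]] := KEY hab hP hX.
exact: (leq_trans hS (num_facets_le hFS hF)).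
Qed.
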